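(* Let $M,P$ be positive integers, let $\Gamma$ be the set of positive 1-1 vectors in $\{-1,0,1,\dots,M\}^P$, let $\eta_i(j)>0$ for $i\in\{1,\dots,P\}$, $j\in\{-1,\dots,M\}$ be as in the context, and let $\pi$ be the target distribution $\pi(\gamma)\propto 1_{\Gamma}(\gamma)\prod_{i=1}^P\eta_i(\gamma_i)$. Consider the Gibbs sampler on $\Gamma$ with transition kernel $$\pi(\gamma'|\gamma)=\prod_{n=1}^P\pi_n(\gamma'_n|\gamma'_1,\dots,\gamma'_{n-1},\gamma_{n+1},\dots,\gamma_P),$$ where, writing $\bar n=\{1,\dots,P\}\setminus\{n\}$ and $\gamma_{\bar n}$ for the vector with the $n$-th coordinate removed, the conditionals are given by $$\pi_n(\gamma_n|\gamma_{\bar n})\propto\eta_n(\gamma_n)\prod_{i\in\bar n}\big(1-1_{\{1,\dots,M\}}(\gamma_n)\,\delta_{\gamma_n}[\gamma_i]\big).$$ Then, starting from any initial state in $\Gamma$, the sampler converges to $\pi$ at an exponential rate: letting $\pi^j(\gamma'|\gamma)$ denote the $j$-step transition probabilities and $\beta=\min_{\gamma,\gamma'\in\Gamma}\pi^2(\gamma'|\gamma)$, one has $\beta>0$ and for every $j\ge1$ $$\max_{\gamma,\gamma'\in\Gamma}\big|\pi^j(\gamma'|\gamma)-\pi(\gamma')\big|\le(1-2\beta)^{\lfloor j/2\rfloor}.$$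
   Context: A vector $\gamma\in\{-1,\dots,M\}^P$ is positive 1-1 if there are no distinct $i,i'$ with $\gamma_i=\gamma_{i'}>0$. $1_S$ is the indicator of $S$; $\delta_a[b]=1$ if $a=b$ and $0$ otherwise. In the paper the weights arise as follows: given labels $\ell_1,\dots,\ell_R$ of existing objects and birth labels $\ell_{R+1},\dots,\ell_P$, expected survival probabilities $\bar P_S(\ell_i)\in(0,1)$ ($i\le R$), birth probabilities $r_B(\ell_i)$ ($i>R$), and positive quantities $\bar\psi^{(j)}(\ell_i)$ (predicted likelihood of label $\ell_i$ being misdetected, $j=0$, or generating measurement $j\in\{1,\dots,M\}$), one sets $\eta_i(j)=1-\bar P_S(\ell_i)$ if $i\le R$, $j<0$; $\eta_i(j)=\bar P_S(\ell_i)\bar\psi^{(j)}(\ell_i)$ if $i\le R$, $j\ge0$; $\eta_i(j)=1-r_B(\ell_i)$ if $i>R$, $j<0$; $\eta_i(j)=r_B(\ell_i)\bar\psi^{(j)}(\ell_i)$ if $i>R$, $j\ge0$. These are assumed to satisfy $\eta_i(j)>0$ for all $i,j$. *)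

(* Defs.v *)
From HB Require Import structures.
From mathcomp Require Import all_boot all_order all_algebra.
Set Implicit Arguments. Unset Strict Implicit. Unset Printing Implicit Defensive.
Import Order.TTheory GRing.Theory Num.Theory.
Local Open Scope ring_scope.

(* Coordinate values: an element j : 'I_(M.+2) encodes the label
   lab j = j - 1 in {-1, 0, 1, ..., M}. *)
Definition lab (M : nat) (j : 'I_(M.+2)) : int := (nat_of_ord j)%:Z - 1.

Definition state (P M : nat) := {ffun 'I_P -> 'I_(M.+2)}.

Definition pos_one_one (P M : nat) (g : state P M) : bool :=
  [forall i : 'I_P, forall i' : 'I_P,
     (i != i') ==> ~~ ((lab (g i) == lab (g i')) && (0 < lab (g i)))].

(* The weights eta_i(j) of the paper (0-based index i; the paper's i <= R
   is val i < Rn). psi i j is \bar psi^{(j)}(ell_i) for j in {0..M}. *)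
Definition etaw (R : realFieldType) (P Rn : nat) (PS rB : 'I_P -> R)
    (psi : 'I_P -> int -> R) (i : 'I_P) (j : int) : R :=
  if (nat_of_ord i < Rn)%N then
    (if j < 0 then 1 - PS i else PS i * psi i j)
  else (if j < 0 then 1 - rB i else rB i * psi i j).

Section Chain.
Variables (R : realFieldType) (P M : nat) (et : 'I_P -> int -> R).

Definition weight (g : state P M) : R := \prod_(i : 'I_P) et i (lab (g i)).
Definition target (g : state P M) : R :=
  if pos_one_one g then weight g / \sum_(h : state P M | pos_one_one h) weight h
  else 0.

(* Unnormalised full conditional of coordinate n given gamma_{\bar n}
   (coordinate n of g is ignored):
   eta_n(x) prod_{i <> n} (1 - 1_{1..M}(x) delta_x[gamma_i]). *)
Definition cond_w (n : 'I_P) (g : state P M) (x : 'I_(M.+2)) : R :=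
  et n (lab x) *
  \prod_(i : 'I_P | i != n)
     (1 - ((0 < lab x)%R : bool)%:R * ((lab x == lab (g i)) : bool)%:R).

Definition cond (n : 'I_P) (g : state P M) (x : 'I_(M.+2)) : R :=
  cond_w n g x / \sum_(y : 'I_(M.+2)) cond_w n g y.

Definition mixst (n : 'I_P) (g g' : state P M) : state P M :=
  [ffun i => if (nat_of_ord i < nat_of_ord n)%N then g' i else g i].

Definition kernel (g g' : state P M) : R :=
  \prod_(n : 'I_P) cond n (mixst n g g') (g' n).

Fixpoint kpow (j : nat) (g g' : state P M) : R :=
  match j with
  | O => (g == g')%:R
  | S k => \sum_(h : state P M) kpow k g h * kernel h g'
  end.

End Chain.

(* Main.v *)
Require Import Defs.
From HB Require Import structures.
From mathcomp Require Import all_boot all_order all_algebra.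
From mathcomp Require Import zify ring.
Set Implicit Arguments. Unset Strict Implicit. Unset Printing Implicit Defensive.
Import Order.TTheory GRing.Theory Num.Theory.
Local Open Scope ring_scope.

Lemma b2r_mul_01 (R : realFieldType) (b c : bool) :
  1 - (b%:R : R) * (c%:R) = (~~ (b && c))%:R.
Proof. by case: b; case: c; rewrite /= ?mulr0 ?mul0r ?mulr1 ?subr0 ?subrr. Qed.

Lemma prod_b2r (R : realFieldType) (I : finType) (Q : pred I) (b : I -> bool) :
  \prod_(i | Q i) ((b i)%:R : R) = [forall i, Q i ==> b i]%:R.
Proof.
case: (boolP [forall i, Q i ==> b i]) => [/forallP H|/forallP H].
  by apply: big1 => i Qi; move: (H i); rewrite Qi /= => ->.
have [i] : exists i, ~~ (Q i ==> b i).
  by apply/existsP; rewrite -negb_forall; apply/forallP.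
rewrite negb_imply => /andP[Qi bi].
by rewrite (bigD1 i) //= (negbTE bi) mul0r.
Qed.

Lemma lab_ge (M : nat) (x : 'I_(M.+2)) : -1 <= lab x <= M%:Z.
Proof.
have := ltn_ord x; rewrite /lab; lia.
Qed.

Lemma cond_w_ge0 (R : realFieldType) (P M : nat) (et : 'I_P -> int -> R)
  (etpos : forall i (x : 'I_(M.+2)), 0 < et i (lab x)) n (g : state P M) x :
  0 <= cond_w et n g x.
Proof.
rewrite /cond_w; apply: mulr_ge0; first exact: ltW.
apply: prodr_ge0 => i _.
by rewrite b2r_mul_01 ler0n.
Qed.

Lemma cond_w_0 (R : realFieldType) (P M : nat) (et : 'I_P -> int -> R)
  n (g : state P M) : cond_w et n g ord0 = et n (-1).
Proof.
rewrite /cond_w big1 ?mulr1 // => i _.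
by rewrite /lab /= mul0r subr0.
Qed.

Lemma cond_den_gt0 (R : realFieldType) (P M : nat) (et : 'I_P -> int -> R)
  (etpos : forall i (x : 'I_(M.+2)), 0 < et i (lab x)) n (g : state P M) :
  0 < \sum_(y : 'I_(M.+2)) cond_w et n g y.
Proof.
rewrite (bigD1 ord0) //= cond_w_0.
apply: ltr_wpDr; first by apply: sumr_ge0 => y _; exact: cond_w_ge0.
exact: (etpos n ord0).
Qed.

Lemma cond_ge0 (R : realFieldType) (P M : nat) (et : 'I_P -> int -> R)
  (etpos : forall i (x : 'I_(M.+2)), 0 < et i (lab x)) n (g : state P M) x :
  0 <= cond et n g x.
Proof. by rewrite /cond divr_ge0 ?cond_w_ge0 // ltW // cond_den_gt0. Qed.

Lemma cond_sum (R : realFieldType) (P M : nat) (et : 'I_P -> int -> R)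
  (etpos : forall i (x : 'I_(M.+2)), 0 < et i (lab x)) n (g : state P M) :
  \sum_x cond et n g x = 1.
Proof.
rewrite /cond -mulr_suml divff //; exact/lt0r_neq0/cond_den_gt0.
Qed.

Lemma cond_w_offk (R : realFieldType) (P M : nat) (et : 'I_P -> int -> R)
  n (g h : state P M) :
  (forall i, i != n -> g i = h i) -> cond_w et n g =1 cond_w et n h.
Proof.
move=> E x; rewrite /cond_w; congr (_ * _); apply: eq_bigr => i /E -> //.
Qed.

Lemma cond_offk (R : realFieldType) (P M : nat) (et : 'I_P -> int -> R)
  n (g h : state P M) :
  (forall i, i != n -> g i = h i) -> cond et n g =1 cond et n h.
Proof.
move=> E x; rewrite /cond (cond_w_offk _ E); congr (_ / _).
by apply: eq_bigr => y _; rewrite (cond_w_offk _ E).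
Qed.


Definition upd (P M : nat) (g : state P M) (k : 'I_P) (x : 'I_(M.+2)) : state P M :=
  [ffun i => if i == k then x else g i].

Lemma sum_delta (R : realFieldType) (T : finType) (F : T -> R) (u : T) :
  \sum_(t : T) F t * (t == u)%:R = F u.
Proof.
rewrite (bigD1 u) //= eqxx mulr1 big1 ?addr0 // => t /negbTE ->.
by rewrite mulr0.
Qed.

Lemma reindex_upd (R : realFieldType) (P M : nat) (F : state P M -> R)
  (h : state P M) (k : 'I_P) :
  \sum_(g' : state P M) F g' * [forall i, (i != k) ==> (g' i == h i)]%:R
  = \sum_(x : 'I_(M.+2)) F (upd h k x).
Proof.
under [RHS]eq_bigr => x _ do rewrite -(sum_delta F).
rewrite exchange_big /=; apply: eq_bigr => g' _.
rewrite -mulr_sumr; congr (_ * _).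
case: (boolP [forall i, (i != k) ==> (g' i == h i)]) => [/forallP H|/forallP H].
  rewrite (bigD1 (g' k)) //= big1 ?addr0.
    have E : g' = upd h k (g' k).
    apply/ffunP => i; rewrite ffunE; case: eqP => [->//|/eqP ik].
    by move: (H i); rewrite ik => /eqP.
    by rewrite -E eqxx.
  move=> x xn; case: eqP => // E; case/negP: xn.
  by rewrite E ffunE eqxx.
rewrite big1 // => x _; case: eqP => // E; case: H => i.
by rewrite E ffunE; case: eqP => // _; rewrite eqxx implybT.
Qed.

Definition Kp (R : realFieldType) (P M : nat) (et : 'I_P -> int -> R) (k : nat)
  (g g' : state P M) : R :=
  (\prod_(n : 'I_P | (n < k)%N) cond et n (mixst n g g') (g' n)) *
  [forall i : 'I_P, (k <= i)%N ==> (g' i == g i)]%:R.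

Definition Tk (R : realFieldType) (P M : nat) (et : 'I_P -> int -> R) (k : 'I_P)
  (h g' : state P M) : R :=
  cond et k h (g' k) * [forall i, (i != k) ==> (g' i == h i)]%:R.

Lemma Kp_step (R : realFieldType) (P M : nat) (et : 'I_P -> int -> R) (k : 'I_P)
  (g g' : state P M) :
  Kp et k.+1 g g' = \sum_(h : state P M) Kp et k g h * Tk et k h g'.
Proof.
pose hk : state P M := mixst k g g'.
rewrite (bigD1 hk) //= big1 ?addr0; last first.
  move=> h hn; rewrite /Kp /Tk.
  case: (boolP [forall i : 'I_P, (k <= i)%N ==> (h i == g i)]) => [/forallP H1|];
    last by rewrite mulr0 mul0r.
  case: (boolP [forall i, (i != k) ==> (g' i == h i)]) => [/forallP H2|];
    last by rewrite !mulr0.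
  case/negP: hn; apply/eqP/ffunP => i; rewrite ffunE.
  case: ltnP => ik.
    have : i != k by rewrite neq_ltn ik.
    by move=> /(implyP (H2 i)) /eqP.
  by move: (H1 i); rewrite ik => /eqP.
rewrite /Kp /Tk.
have -> : [forall i : 'I_P, (k <= i)%N ==> (hk i == g i)] = true.
  by apply/forallP => i; apply/implyP => ki; rewrite ffunE ltnNge ki.
rewrite mulr1 (bigD1 k) //= mulrA [X in _ = X * _]mulrC; congr (_ * _ * _).
  apply: eq_big => [n|n nk]; first by rewrite ltnS andbC -ltn_neqAle.
  have nk' : (n < k)%N by move: nk; rewrite ltnS andbC -ltn_neqAle.
  rewrite /hk [X in _ = _ X]ffunE nk'; congr (cond _ _ _ _); apply/ffunP => i; rewrite !ffunE.
  by case: ltnP => // ni; rewrite (ltn_trans ni).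
congr (GRing.natmul _ (nat_of_bool _)); apply/forallP/forallP => H i.
  apply/implyP => ik; rewrite ffunE; case: ltnP => // ki.
  by apply: (implyP (H i)); rewrite ltn_neqAle eq_sym ik.
apply/implyP => ki; move: (H i); rewrite ffunE ltnNge (ltnW ki) /=.
by rewrite neq_ltn ki orbT.
Qed.


Definition offk_ok (P M : nat) (g : state P M) (k : 'I_P) : bool :=
  [forall i, forall i', ((i != k) && (i' != k) && (i != i')) ==>
     ~~ ((lab (g i) == lab (g i')) && (0 < lab (g i)))].

Definition nocol (P M : nat) (g : state P M) (k : 'I_P) (x : 'I_(M.+2)) : bool :=
  [forall i, (i != k) ==> ~~ ((0 < lab x) && (lab x == lab (g i)))].

Lemma upd_self (P M : nat) (g : state P M) k : upd g k (g k) = g.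
Proof. by apply/ffunP => i; rewrite ffunE; case: eqP => // ->. Qed.

Lemma poo_upd (P M : nat) (g : state P M) k x :
  pos_one_one (upd g k x) = offk_ok g k && nocol g k x.
Proof.
apply/idP/idP.
  move=> /forallP H; apply/andP; split.
    apply/forallP => i; apply/forallP => i'; apply/implyP => /andP[/andP[ik i'k] ii'].
    move: (forallP (H i) i'); rewrite ii' /= !ffunE (negbTE ik) (negbTE i'k) //.
  apply/forallP => i; apply/implyP => ik.
  move: (forallP (H k) i); rewrite eq_sym ik /= !ffunE eqxx (negbTE ik).
  by rewrite andbC.
move=> /andP[/forallP Ho /forallP Hn]; apply/forallP => i; apply/forallP => i'.
apply/implyP => ii'; rewrite !ffunE.
case: (eqVneq i k) => [ik|ik].
  have i'k : i' != k by rewrite -ik eq_sym.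
  by rewrite (negbTE i'k); move: (implyP (Hn i') i'k); rewrite andbC.
case: (eqVneq i' k) => [i'k|i'k].
  move: (implyP (Hn i) ik); apply: contra => /andP[/eqP E pos].
  by rewrite -E pos eqxx.
by move: (implyP (forallP (Ho i) i')); rewrite ik i'k ii'; apply.
Qed.

Lemma cond_w_nocol (R : realFieldType) (P M : nat) (et : 'I_P -> int -> R)
  k (g : state P M) x : cond_w et k g x = et k (lab x) * (nocol g k x)%:R.
Proof.
rewrite /cond_w /nocol -prod_b2r; congr (_ * _); apply: eq_bigr => i _.
exact: b2r_mul_01.
Qed.

Lemma weight_upd (R : realFieldType) (P M : nat) (et : 'I_P -> int -> R)
  (g : state P M) k x :
  weight et (upd g k x) = et k (lab x) * \prod_(i | i != k) et i (lab (g i)).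
Proof.
rewrite /weight (bigD1 k) //= ffunE eqxx; congr (_ * _).
by apply: eq_bigr => i ik; rewrite ffunE (negbTE ik).
Qed.

Definition Zs (R : realFieldType) (P M : nat) (et : 'I_P -> int -> R) : R :=
  \sum_(h : state P M | pos_one_one h) weight et h.

Lemma target_eq (R : realFieldType) (P M : nat) (et : 'I_P -> int -> R) (u : state P M) :
  target et u = (pos_one_one u)%:R * weight et u / Zs M et.
Proof. by rewrite /target /Zs; case: (pos_one_one u); rewrite ?mul1r ?mul0r. Qed.

Lemma target_upd (R : realFieldType) (P M : nat) (et : 'I_P -> int -> R)
  (g : state P M) k x :
  target et (upd g k x) =
  (offk_ok g k)%:R * (\prod_(i | i != k) et i (lab (g i))) / Zs M et * cond_w et k g x.
Proof.
rewrite target_eq poo_upd -mulnb natrM weight_upd cond_w_nocol.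
set a := (offk_ok g k)%:R; set b := (nocol g k x)%:R; set c := et k _.
set d := \prod_(i | _) _; set z := Zs M et.
ring.
Qed.


Lemma Tk_rowsum (R : realFieldType) (P M : nat) (et : 'I_P -> int -> R)
  (etpos : forall i (x : 'I_(M.+2)), 0 < et i (lab x)) k (h : state P M) :
  \sum_(g' : state P M) Tk et k h g' = 1.
Proof.
rewrite /Tk (reindex_upd (fun g' : state P M => cond et k h (g' k))).
under eq_bigr => x _ do rewrite ffunE eqxx.
exact: cond_sum.
Qed.

Lemma site_inv (R : realFieldType) (P M : nat) (et : 'I_P -> int -> R)
  (etpos : forall i (x : 'I_(M.+2)), 0 < et i (lab x)) k (g' : state P M) :
  \sum_(h : state P M) target et h * Tk et k h g' = target et g'.
Proof.
rewrite /Tk.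
under eq_bigr => h _ do rewrite mulrA.
under eq_bigr => h _.
  have -> : [forall i, (i != k) ==> (g' i == h i)] = [forall i, (i != k) ==> (h i == g' i)].
    by apply: eq_forallb => i; rewrite [g' i == _]eq_sym.
  over.
rewrite (reindex_upd (fun h : state P M => target et h * cond et k h (g' k))).
under eq_bigr => x _.
  rewrite (@cond_offk _ _ _ _ k (upd g' k x) g'); last first.
    by move=> i ik; rewrite ffunE (negbTE ik).
  rewrite target_upd.
  over.
rewrite -mulr_suml -mulr_sumr.
have Dpos := cond_den_gt0 etpos k g'.
rewrite -[in RHS](upd_self g' k) target_upd /cond.
move: Dpos; set D := \sum_(y < M.+2) _ => Dpos.
have Dn : D != 0 by exact: lt0r_neq0.
set a := (offk_ok g' k)%:R; set z := Zs M et.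
set w := z^-1; field; exact: Dn.
Qed.

Lemma Kp0 (R : realFieldType) (P M : nat) (et : 'I_P -> int -> R) (g g' : state P M) :
  Kp et 0 g g' = (g' == g)%:R.
Proof.
rewrite /Kp big_pred0 // mul1r; congr (GRing.natmul _ (nat_of_bool _)).
apply/forallP/eqP => [H|->]; last by move=> i; rewrite eqxx implybT.
by apply/ffunP => i; move: (H i) => /eqP.
Qed.

Lemma KpP (R : realFieldType) (P M : nat) (et : 'I_P -> int -> R) (g g' : state P M) :
  Kp et P g g' = kernel et g g'.
Proof.
rewrite /Kp /kernel.
have -> : [forall i : 'I_P, (P <= i)%N ==> (g' i == g i)] = true.
  by apply/forallP => i; rewrite leqNgt ltn_ord.
by rewrite mulr1; apply: eq_bigl => n; rewrite ltn_ord.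
Qed.

Lemma Kp_rowsum (R : realFieldType) (P M : nat) (et : 'I_P -> int -> R)
  (etpos : forall i (x : 'I_(M.+2)), 0 < et i (lab x)) (k : nat) (g : state P M) :
  (k <= P)%N -> \sum_(g' : state P M) Kp et k g g' = 1.
Proof.
elim: k => [_|k IH kP].
  rewrite -(sum_delta (fun _ => 1 : R) g); apply: eq_bigr => g' _.
  by rewrite Kp0 mul1r.
have kP' : (k < P)%N by [].
rewrite -(IH (ltnW kP)).
transitivity (\sum_(g' : state P M) Kp et (Ordinal kP').+1 g g'); first by [].
under eq_bigr => g' _ do rewrite Kp_step.
rewrite exchange_big /=; apply: eq_bigr => h _.
by rewrite -mulr_sumr Tk_rowsum // mulr1.
Qed.

Lemma Kp_stat (R : realFieldType) (P M : nat) (et : 'I_P -> int -> R)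
  (etpos : forall i (x : 'I_(M.+2)), 0 < et i (lab x)) (k : nat) (g' : state P M) :
  (k <= P)%N -> \sum_(g : state P M) target et g * Kp et k g g' = target et g'.
Proof.
elim: k g' => [g' _|k IH g' kP].
  under eq_bigr => g _ do rewrite Kp0 eq_sym.
  exact: sum_delta.
have kP' : (k < P)%N by [].
transitivity (\sum_(g : state P M) target et g * Kp et (Ordinal kP').+1 g g'); first by [].
under eq_bigr => g _ do rewrite Kp_step mulr_sumr.
rewrite exchange_big /=.
under eq_bigr => h _.
  under eq_bigr => g _ do rewrite mulrA.
  rewrite -mulr_suml IH; last exact: ltnW.
  over.
exact: site_inv.
Qed.

Lemma kernel_rowsum (R : realFieldType) (P M : nat) (et : 'I_P -> int -> R)
  (etpos : forall i (x : 'I_(M.+2)), 0 < et i (lab x)) (g : state P M) :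
  \sum_(g' : state P M) kernel et g g' = 1.
Proof.
by under eq_bigr => g' _ do rewrite -KpP; exact: Kp_rowsum.
Qed.

Lemma kernel_stat (R : realFieldType) (P M : nat) (et : 'I_P -> int -> R)
  (etpos : forall i (x : 'I_(M.+2)), 0 < et i (lab x)) (g' : state P M) :
  \sum_(g : state P M) target et g * kernel et g g' = target et g'.
Proof.
by under eq_bigr => g _ do rewrite -KpP; exact: Kp_stat.
Qed.


Lemma kernel_ge0 (R : realFieldType) (P M : nat) (et : 'I_P -> int -> R)
  (etpos : forall i (x : 'I_(M.+2)), 0 < et i (lab x)) (g g' : state P M) :
  0 <= kernel et g g'.
Proof. by apply: prodr_ge0 => n _; exact: cond_ge0. Qed.

Lemma cond_collide (R : realFieldType) (P M : nat) (et : 'I_P -> int -> R)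
  (n m : 'I_P) (g : state P M) (x : 'I_(M.+2)) :
  m != n -> 0 < lab x -> lab x == lab (g m) -> cond et n g x = 0.
Proof.
move=> mn px E; rewrite /cond /cond_w (bigD1 m) //= px E /=.
by rewrite mulr1 subrr mul0r mulr0 mul0r.
Qed.

Lemma kernel_out (R : realFieldType) (P M : nat) (et : 'I_P -> int -> R)
  (h g' : state P M) : ~~ pos_one_one g' -> kernel et h g' = 0.
Proof.
move=> /forallPn [i /forallPn [i']]; rewrite negb_imply negbK.
move=> /andP [ii' /andP [/eqP E pos]].
case: (ltngtP i i') => [lt|gt|eqv].
- rewrite /kernel (bigD1 i') //= (@cond_collide _ _ _ _ _ i) ?mul0r //.
  + by rewrite -E.
  + by rewrite ffunE lt E.
- rewrite /kernel (bigD1 i) //= (@cond_collide _ _ _ _ _ i') ?mul0r //.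
  + by rewrite eq_sym.
  + by rewrite ffunE gt E.
- by move: ii'; rewrite (val_inj eqv) eqxx.
Qed.

Definition estate (P M : nat) : state P M := [ffun _ => ord0].

Lemma cond_pos_of (R : realFieldType) (P M : nat) (et : 'I_P -> int -> R)
  (etpos : forall i (x : 'I_(M.+2)), 0 < et i (lab x)) n (g : state P M) x :
  nocol g n x -> 0 < cond et n g x.
Proof.
move=> H; rewrite /cond cond_w_nocol H mulr1 divr_gt0 //.
exact: cond_den_gt0.
Qed.

Lemma kernel_to_e (R : realFieldType) (P M : nat) (et : 'I_P -> int -> R)
  (etpos : forall i (x : 'I_(M.+2)), 0 < et i (lab x)) (g : state P M) :
  0 < kernel et g (estate P M).
Proof.
apply: prodr_gt0 => n _; apply: cond_pos_of => //.
by apply/forallP => i; rewrite ffunE /lab /= implybT.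
Qed.

Lemma kernel_from_e (R : realFieldType) (P M : nat) (et : 'I_P -> int -> R)
  (etpos : forall i (x : 'I_(M.+2)), 0 < et i (lab x)) (g' : state P M) :
  pos_one_one g' -> 0 < kernel et (estate P M) g'.
Proof.
move=> /forallP H; apply: prodr_gt0 => n _; apply: cond_pos_of => //.
apply/forallP => i; apply/implyP => iN; rewrite ffunE.
case: ltnP => _.
  move: (implyP (forallP (H n) i)); rewrite eq_sym iN => /(_ isT).
  by rewrite andbC.
by rewrite ffunE /lab /=; apply/negP => /andP [p /eqP E]; move: p; rewrite E.
Qed.


Lemma kpow_add (R : realFieldType) (P M : nat) (et : 'I_P -> int -> R) a b
  (x y : state P M) :
  kpow et (a + b) x y = \sum_(z : state P M) kpow et a x z * kpow et b z y.
Proof.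
elim: b y => [|b IH] y.
  rewrite addn0 /=; symmetry; exact: sum_delta.
rewrite addnS /=.
under eq_bigr => h _ do rewrite IH mulr_suml.
rewrite exchange_big /=; apply: eq_bigr => z _.
by rewrite mulr_sumr; apply: eq_bigr => h _; rewrite mulrA.
Qed.

Lemma kpow_ge0 (R : realFieldType) (P M : nat) (et : 'I_P -> int -> R)
  (etpos : forall i (x : 'I_(M.+2)), 0 < et i (lab x)) j (x y : state P M) :
  0 <= kpow et j x y.
Proof.
elim: j y => [|j IH] y /=; first exact: ler0n.
apply: sumr_ge0 => h _; apply: mulr_ge0 => //; exact: kernel_ge0.
Qed.

Lemma kpow_rowsum (R : realFieldType) (P M : nat) (et : 'I_P -> int -> R)
  (etpos : forall i (x : 'I_(M.+2)), 0 < et i (lab x)) j (x : state P M) :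
  \sum_(y : state P M) kpow et j x y = 1.
Proof.
elim: j => [|j IH] /=.
  rewrite -[RHS](sum_delta (fun _ => 1 : R) x); apply: eq_bigr => y _.
  by rewrite mul1r eq_sym.
rewrite exchange_big /= -[RHS]IH; apply: eq_bigr => h _.
by rewrite -mulr_sumr kernel_rowsum // mulr1.
Qed.

Lemma kpow_out (R : realFieldType) (P M : nat) (et : 'I_P -> int -> R) j
  (x y : state P M) : pos_one_one x -> ~~ pos_one_one y -> kpow et j x y = 0.
Proof.
move=> px py; case: j => [|j] /=.
  by case: eqP => // E; move: py; rewrite -E px.
by apply: big1 => h _; rewrite kernel_out // mulr0.
Qed.

Lemma kpow_stat (R : realFieldType) (P M : nat) (et : 'I_P -> int -> R)
  (etpos : forall i (x : 'I_(M.+2)), 0 < et i (lab x)) j (y : state P M) :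
  \sum_(x : state P M) target et x * kpow et j x y = target et y.
Proof.
elim: j y => [|j IH] y /=; first exact: sum_delta.
under eq_bigr => x _ do rewrite mulr_sumr.
rewrite exchange_big /=.
under eq_bigr => h _.
  under eq_bigr => x _ do rewrite mulrA.
  rewrite -mulr_suml IH.
  over.
exact: kernel_stat.
Qed.

Lemma weight_gt0 (R : realFieldType) (P M : nat) (et : 'I_P -> int -> R)
  (etpos : forall i (x : 'I_(M.+2)), 0 < et i (lab x)) (g : state P M) :
  0 < weight et g.
Proof. by apply: prodr_gt0 => i _. Qed.

Lemma estate_poo (P M : nat) : pos_one_one (estate P M).
Proof.
apply/forallP => i; apply/forallP => i'; apply/implyP => _.
by rewrite !ffunE /lab /=.
Qed.

Lemma Zs_gt0 (R : realFieldType) (P M : nat) (et : 'I_P -> int -> R)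
  (etpos : forall i (x : 'I_(M.+2)), 0 < et i (lab x)) : 0 < Zs M et.
Proof.
rewrite /Zs (bigD1 (estate P M)) ?estate_poo //=.
apply: ltr_wpDr; last exact: weight_gt0.
by apply: sumr_ge0 => h _; exact/ltW/weight_gt0.
Qed.

Lemma target_ge0 (R : realFieldType) (P M : nat) (et : 'I_P -> int -> R)
  (etpos : forall i (x : 'I_(M.+2)), 0 < et i (lab x)) (g : state P M) :
  0 <= target et g.
Proof.
rewrite target_eq !mulr_ge0 ?ler0n ?invr_ge0 //; first exact/ltW/weight_gt0.
exact/ltW/Zs_gt0.
Qed.

Lemma target_sum (R : realFieldType) (P M : nat) (et : 'I_P -> int -> R)
  (etpos : forall i (x : 'I_(M.+2)), 0 < et i (lab x)) :
  \sum_(g : state P M) target et g = 1.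
Proof.
rewrite /target -big_mkcond /= -mulr_suml divff //.
exact/lt0r_neq0/Zs_gt0.
Qed.

Lemma target_out (R : realFieldType) (P M : nat) (et : 'I_P -> int -> R)
  (g : state P M) : ~~ pos_one_one g -> target et g = 0.
Proof. by rewrite /target => /negbTE ->. Qed.


Lemma contract (R : realFieldType) (T : finType) (S : pred T) (a b f : T -> R) (s c : R) :
  0 <= c -> (forall z, 0 <= a z) -> (forall z, 0 <= b z) ->
  (forall z, ~~ S z -> a z = 0) -> (forall z, ~~ S z -> b z = 0) ->
  \sum_z a z = s -> \sum_z b z = s ->
  (forall z z', S z -> S z' -> f z - f z' <= c) ->
  \sum_z a z * f z - \sum_z b z * f z <= s * c.
Proof.
move=> c0 a0 b0 aS bS sa sb fc.
have key : s * (\sum_z a z * f z - \sum_z b z * f z) =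
    \sum_z \sum_z' a z * b z' * (f z - f z').
  transitivity ((\sum_z a z * f z) * (\sum_z' b z') - (\sum_z a z) * (\sum_z' b z' * f z')).
    by rewrite sa sb; ring.
  rewrite !mulr_suml -sumrB; apply: eq_bigr => z _.
  rewrite !mulr_sumr -sumrB; apply: eq_bigr => z' _; ring.
have bnd : s * (\sum_z a z * f z - \sum_z b z * f z) <= s * (s * c).
  rewrite key; apply: le_trans (_ : \sum_z \sum_z' a z * b z' * c <= _).
    apply: ler_sum => z _; apply: ler_sum => z' _.
    case: (boolP (S z)) => Sz; last by rewrite aS // !mul0r.
    case: (boolP (S z')) => Sz'; last by rewrite bS // mulr0 !mul0r.
    by apply: ler_wpM2l; [exact: mulr_ge0 | exact: fc].
  rewrite -[X in X * (_ * _)]sa mulr_suml le_eqVlt; apply/orP; left; apply/eqP.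
  apply: eq_bigr => z _.
  rewrite -sb mulr_suml mulr_sumr; apply: eq_bigr => z' _; ring.
have s0 : 0 <= s by rewrite -sa; exact: sumr_ge0.
case: (ltrP 0 s) => sp; first by move: bnd; rewrite ler_pM2l.
have s00 : s = 0 by apply/eqP; rewrite eq_le sp s0.
have A0 : forall z, a z = 0.
  move=> z; have H := @psumr_eq0P _ _ xpredT a (fun z _ => a0 z) (etrans sa s00).
  exact: H z isT.
have B0 : forall z, b z = 0.
  move=> z; have H := @psumr_eq0P _ _ xpredT b (fun z _ => b0 z) (etrans sb s00).
  exact: H z isT.
rewrite s00 mul0r !big1 ?subrr // => z _; by rewrite ?A0 ?B0 mul0r.
Qed.


Unset Implicit Arguments.

Lemma kpow1 (R : realFieldType) (P M : nat) (et : 'I_P -> int -> R) (g h : state P M) :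
  kpow et 1 g h = kernel et g h.
Proof.
rewrite /= -(sum_delta (fun h' => kernel et h' h) g); apply: eq_bigr => h' _.
by rewrite mulrC eq_sym.
Qed.

Theorem proposition3 (R : realFieldType) (M P Rn : nat)
  (PS rB : 'I_P -> R) (psi : 'I_P -> int -> R) (beta : R) :
  (0 < M)%N -> (0 < P)%N -> (Rn <= P)%N ->
  (forall i : 'I_P, (nat_of_ord i < Rn)%N -> 0 < PS i < 1) ->
  (forall i : 'I_P, (Rn <= nat_of_ord i)%N -> 0 <= rB i <= 1) ->
  (forall (i : 'I_P) (j : int), 0 <= j <= M%:Z -> 0 < psi i j) ->
  (forall (i : 'I_P) (j : int), -1 <= j <= M%:Z -> 0 < etaw Rn PS rB psi i j) ->
  (* beta = min over gamma, gamma' in Gamma of pi^2(gamma' | gamma) *)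
  (exists g g' : state P M, [/\ pos_one_one g, pos_one_one g' &
      beta = kpow (etaw Rn PS rB psi) 2 g g']) ->
  (forall g g' : state P M, pos_one_one g -> pos_one_one g' ->
      beta <= kpow (etaw Rn PS rB psi) 2 g g') ->
  0 < beta /\
  forall j : nat, (1 <= j)%N ->
    forall g g' : state P M, pos_one_one g -> pos_one_one g' ->
      `| kpow (etaw Rn PS rB psi) j g g' - target (etaw Rn PS rB psi) g' |
        <= (1 - 2 * beta) ^+ (j./2).
Proof.
move=> hM hP _ _ _ _ heta [g0 [g0' [p0 p0' Eb]]] hmin.
set et := etaw Rn PS rB psi.
have etpos : forall i (x : 'I_(M.+2)), 0 < et i (lab x).
  by move=> i x; apply: heta; exact: lab_ge.
have K2pos : forall g g' : state P M, pos_one_one g -> pos_one_one g' ->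
    0 < kpow et 2 g g'.
  move=> g g' pg pg'.
  have -> : kpow et 2 g g' = \sum_h kpow et 1 g h * kernel et h g' by [].
  rewrite (bigD1 (estate P M)) // kpow1.
  apply: ltr_pwDl.
    by apply: mulr_gt0; [exact: kernel_to_e | exact: kernel_from_e].
  by apply: sumr_ge0 => h _; apply: mulr_ge0; [exact: kpow_ge0 | exact: kernel_ge0].
have bpos : 0 < beta by rewrite Eb; exact: K2pos.
split => // j _ g y pg py.
pose e1 := estate P M.
have h1 : (1 < M.+2)%N by [].
pose e2 : state P M := [ffun _ => Ordinal h1].
have pe1 : pos_one_one e1 by exact: estate_poo.
have pe2 : pos_one_one e2.
  apply/forallP => i; apply/forallP => i'; apply/implyP => _.
  by rewrite !ffunE /lab /=.
have e12 : e1 != e2.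
  apply/eqP => /ffunP /(_ (Ordinal hP)); rewrite !ffunE => /(congr1 val) //.
pose f (m : nat) (x : state P M) := kpow et (m.*2) x y.
pose a (x z : state P M) := kpow et 2 x z - beta * ((z == e1)%:R + (z == e2)%:R).
have a0 : forall x z, pos_one_one x -> 0 <= a x z.
  move=> x z px; rewrite /a subr_ge0.
  case: (eqVneq z e1) => [->|n1].
    by rewrite (negbTE e12) addr0 mulr1; exact: hmin.
  case: (eqVneq z e2) => [->|n2].
    by rewrite add0r mulr1; exact: hmin.
  by rewrite addr0 mulr0; exact: kpow_ge0.
have aS : forall x z, pos_one_one x -> ~~ pos_one_one z -> a x z = 0.
  move=> x z px pz; rewrite /a kpow_out //.
  have -> : (z == e1) = false by apply/eqP => E; move: pz; rewrite E pe1.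
  have -> : (z == e2) = false by apply/eqP => E; move: pz; rewrite E pe2.
  by rewrite addr0 mulr0 subrr.
have asum : forall x, \sum_z a x z = 1 - 2 * beta.
  move=> x; rewrite /a sumrB kpow_rowsum // -mulr_sumr big_split /=.
  have sd : forall u : state P M, \sum_z ((z == u)%:R : R) = 1.
    move=> u; rewrite -[RHS](sum_delta (fun _ => 1 : R) u).
    by apply: eq_bigr => z _; rewrite mul1r.
  rewrite !sd; ring.
have s0 : 0 <= 1 - 2 * beta.
  by rewrite -(asum e1); apply: sumr_ge0 => z _; exact: a0.
have cpos : forall m : nat, 0 <= (1 - 2 * beta) ^+ m by move=> m; exact: exprn_ge0.
have osc : forall m x x', pos_one_one x -> pos_one_one x' ->
    f m x - f m x' <= (1 - 2 * beta) ^+ m.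
  elim=> [|m IH] x x' px px'.
    rewrite expr0 /f /=.
    case: (x == y); case: (x' == y); rewrite /= ?subr0 ?subrr ?ler01 ?lexx //.
    by rewrite sub0r (le_trans (lerN10 _) ler01).
  have E : forall x, f m.+1 x = \sum_z kpow et 2 x z * f m z.
    by move=> x0; rewrite /f doubleS -add2n kpow_add.
  have Ea : forall x, \sum_z a x z * f m z = f m.+1 x - beta * (f m e1 + f m e2).
    move=> x0; rewrite E -(sum_delta (f m) e1) -(sum_delta (f m) e2) mulrDr !mulr_sumr.
    rewrite -big_split -sumrB; apply: eq_bigr => z _; rewrite /a; set K := kpow et 2 x0 z; rewrite /=; ring.
  have := contract (cpos m) (a0 x ^~ px) (a0 x' ^~ px') (aS x ^~ px) (aS x' ^~ px')
    (asum x) (asum x') (IH).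
  by rewrite !Ea exprS; apply: le_trans; rewrite le_eqVlt; apply/orP; left; apply/eqP; ring.
have -> : kpow et j g y = kpow et (odd j + j./2.*2)%N g y by rewrite odd_double_half.
rewrite kpow_add.
rewrite -(kpow_stat etpos (j./2).*2 y).
have ka0 : forall z, 0 <= kpow et (odd j) g z by move=> z; exact: (kpow_ge0 etpos).
have kaS : forall z, ~~ pos_one_one z -> kpow et (odd j) g z = 0.
  by move=> z pz; exact: kpow_out.
have t0 : forall z : state P M, 0 <= target et z by move=> z; exact: (target_ge0 etpos).
have tS : forall z : state P M, ~~ pos_one_one z -> target et z = 0 by move=> z; exact: target_out.
have := contract (cpos j./2) ka0 t0 kaS tS (kpow_rowsum etpos _ g) (target_sum etpos)
  (osc j./2).
have := contract (cpos j./2) t0 ka0 tS kaS (target_sum etpos) (kpow_rowsum etpos _ g)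
  (osc j./2).
rewrite !mul1r /f => H1 H2; rewrite ler_norml H2 andbT.
by rewrite lerNl opprB.
Qed.
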